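(* In the setting described in the context, for every partial construction map $\zeta'$, $$E'(\zeta')=\sum_{k\in U}w_k\Big(1-\prod_{j\in T_k}\big(1-P^{\zeta'(j)}_{i_kj}\big)\Big).$$
   Context: An SPSC instance: finite sets $S$ (services), $V$ (nodes), $U$ (users); sizes $s_i>0$; capacities $c_j>0$; for each user $k$ a service $i_k\in S$, a set $T_k\subseteq V$, a reward $w_k>0$. Let $\{x_{ij}\},\{y_k\}$ be an optimal solution of the LP with nonnegative variables: maximize $\sum_ky_kw_k$ s.t. $y_k\le\sum_{j\in T_k}x_{i_kj}$, $y_k\le1$; $\sum_ix_{ij}s_i\le c_j$; $x_{ij}=0$ if $s_i>c_j$; $0\le x_{ij}\le1$. Let $\beta:=1/4,\gamma:=1/2,\delta:=1/4$, $\mathbb N=\{1,2,\dots\}$. For $j\in V$: $P_j^\oplus:=\{i:c_j/2<s_i\le c_j\}$, $P_j^\ominus:=\{i:c_j/4<s_i\le c_j/2\}$, $P_j^q:=\{i:\gamma^qc_j\beta<s_i\le\gamma^{q-1}c_j\beta\}$ ($q\in\mathbb N$); $d_j^q:=\sum_{i\in P_j^q}x_{ij}$ for $q\in\mathbb N\cup\{\oplus,\ominus\}$; $v_j:=\delta c_j/\sum_{i:s_i\le c_j\beta}s_ix_{ij}$; $n_j^q:=\lceil v_jd_j^q\rceil$; $h_j:=d_j^\ominus$ if $d_j^\ominus<2$, else $d_j^\ominus/2$. A construction map $\zeta:V\to\{1,2,3\}$ has slot set $\Lambda(\zeta)$ (slot $\sigma$ has node $\nu(\sigma)$, class $\kappa(\sigma)$):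 for each $j$, one slot of class $\oplus$ if $\zeta(j)=1$; two slots of class $\ominus$ if $\zeta(j)=2$; for each $q\in\mathbb N$, $n_j^q$ slots of class $q$ if $\zeta(j)=3$; no other slots on $j$. A slot allocation of $\Lambda$ is $\tau:\Lambda\to S$ with $\tau(\sigma)\in P^{\kappa(\sigma)}_{\nu(\sigma)}$; $X^\tau_i:=\{j:\exists\sigma,\nu(\sigma)=j,\tau(\sigma)=i\}$; $f_\tau(k):=\mathbf 1[T_k\cap X^\tau_{i_k}\ne\emptyset]$. Random experiment: $\zeta(j)$ independent over $j$, equal to $1,2,3$ with probabilities $\delta d_j^\oplus,\ \delta h_j,\ 1-\delta d_j^\oplus-\delta h_j$; given $\zeta$, each slot $\sigma\in\Lambda(\zeta)$ independently gets $\tau(\sigma)=i$ with probability $x_{i\nu(\sigma)}/d^{\kappa(\sigma)}_{\nu(\sigma)}$, $i\in P^{\kappa(\sigma)}_{\nu(\sigma)}$. A partial construction map is $\zeta':V\to\{1,2,3,\emptyset\}$; $M(\zeta')$ is the set of construction maps agreeing with $\zeta'$ wherever $\zeta'(j)\ne\emptyset$; $E'(\zeta'):=\mathbb E[\sum_kf_\tau(k)w_k\mid\zeta\in M(\zeta')]$. For $i\in S$, $j\in V$ define $P^a_{ij}$, $a\in\{1,2,3\}$: if $s_i>c_j$, all are $0$; if $i\in P_j^\oplus$, $P^1_{ij}:=x_{ij}/d_j^\oplus$ and $P^2_{ij}=P^3_{ij}:=0$; if $i\in P_j^\ominus$, $P^2_{ij}:=1-(1-x_{ij}/d_j^\ominus)^2$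 and $P^1_{ij}=P^3_{ij}:=0$; if $i\in P_j^q$ for some $q\in\mathbb N$, $P^3_{ij}:=1-(1-x_{ij}/d_j^q)^{n_j^q}$ and $P^1_{ij}=P^2_{ij}:=0$. Further $P^\emptyset_{ij}:=\delta d_j^\oplus P^1_{ij}+\delta h_jP^2_{ij}+(1-\delta d_j^\oplus-\delta h_j)P^3_{ij}$. *)

(* Defs.v *)
From mathcomp Require Import all_boot all_order all_algebra.
Set Implicit Arguments.
Unset Strict Implicit.
Unset Printing Implicit Defensive.
Import Order.TTheory GRing.Theory Num.Theory.
Local Open Scope ring_scope.

(* Slot classes: oplus, ominus, and q (q >= 1). *)
Inductive cls := Cplus | Cminus | Cq of nat.

(* Values of a construction map: the ordinal 0, 1, 2 : 'I_3 encode the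
   values 1, 2, 3 of the paper.  A partial construction map takes values in
   option 'I_3, with None encoding the empty value. *)

Section SPSC.
Variable R : archiRealFieldType.
Variables S V U : finType.
Variable s : S -> R.
Variable c : V -> R.
Variable iu : U -> S.           (* service of user k *)
Variable T : U -> {set V}.
Variable w : U -> R.

Definition lp_feasible (x : S -> V -> R) (y : U -> R) : Prop :=
  (forall k, 0 <= y k) /\
  (forall k, y k <= \sum_(j in T k) x (iu k) j) /\
  (forall k, y k <= 1) /\
  (forall j, \sum_i x i j * s i <= c j) /\
  (forall i j, c j < s i -> x i j = 0) /\
  (forall i j, 0 <= x i j /\ x i j <= 1).

Definition lp_obj (y : U -> R) : R := \sum_k y k * w k.

Definition lp_optimal (x : S -> V -> R) (y : U -> R) : Prop :=
  lp_feasible x y /\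
  forall x' y', lp_feasible x' y' -> lp_obj y' <= lp_obj y.

Variable x : S -> V -> R.

Definition beta : R := 1 / 4.
Definition gamma : R := 1 / 2.
Definition delta : R := 1 / 4.

Definition inP (j : V) (k : cls) (i : S) : bool :=
  match k with
  | Cplus => (c j / 2 < s i) && (s i <= c j)
  | Cminus => (c j / 4 < s i) && (s i <= c j / 2)
  | Cq q => (gamma ^+ q * c j * beta < s i) && (s i <= gamma ^+ q.-1 * c j * beta)
  end.

Definition d (j : V) (k : cls) : R := \sum_(i | inP j k i) x i j.

Definition v (j : V) : R :=
  delta * c j / \sum_(i | s i <= c j * beta) s i * x i j.

Definition n (j : V) (q : nat) : nat := `|Num.ceil (v j * d j (Cq q))|%N.

Definition h (j : V) : R :=
  if d j Cminus < 2 then d j Cminus else d j Cminus / 2.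

(* Every q with P_j^q nonempty satisfies 1 <= q <= qbound j
   (since 2^(q-1) <= c_j beta / s_i); hence n_j^q = 0 for q > qbound j. *)
Definition qbound (j : V) : nat :=
  \max_(i : S) (`|Num.floor (c j * beta / s i)|%N).+1.

Definition zprob (j : V) (a : 'I_3) : R :=
  match val a with
  | 0%N => delta * d j Cplus
  | 1%N => delta * h j
  | _ => 1 - delta * d j Cplus - delta * h j
  end.

Definition slots_at (j : V) (a : 'I_3) : seq cls :=
  match val a with
  | 0%N => [:: Cplus]
  | 1%N => [:: Cminus; Cminus]
  | _ => flatten [seq nseq (n j q) (Cq q) | q <- iota 1 (qbound j)]
  end.

Definition slots (z : {ffun V -> 'I_3}) : seq (V * cls) :=
  flatten [seq [seq (j, k) | k <- slots_at j (z j)] | j <- enum V].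

Definition slot_prob (sl : V * cls) (i : S) : R :=
  if inP sl.1 sl.2 i then x i sl.1 / d sl.1 sl.2 else 0.

(* j \in X^tau_i, for the allocation giving the slots L the services t *)
Definition covered (L : seq (V * cls)) (t : seq S) (i : S) (j : V) : bool :=
  has (fun p : (V * cls) * S => (p.1.1 == j) && (p.2 == i)) (zip L t).

Definition reward (L : seq (V * cls)) (t : seq S) : R :=
  \sum_k w k * (if [exists j in T k, covered L t (iu k) j] then 1 else 0).

(* E[ sum_k f_tau(k) w_k | zeta = z ] *)
Definition condE (z : {ffun V -> 'I_3}) : R :=
  \sum_(t : (size (slots z)).-tuple S)
     (\prod_(p <- zip (slots z) t) slot_prob p.1 p.2) * reward (slots z) t.

Definition zeta_prob (z : {ffun V -> 'I_3}) : R := \prod_j zprob j (z j).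

Definition inM (z' : {ffun V -> option 'I_3}) (z : {ffun V -> 'I_3}) : bool :=
  [forall j, if z' j is Some a then z j == a else true].

Definition PM (z' : {ffun V -> option 'I_3}) : R :=
  \sum_(z | inM z' z) zeta_prob z.

(* E'(zeta') = E[ sum_k f_tau(k) w_k | zeta \in M(zeta') ] *)
Definition Eprime (z' : {ffun V -> option 'I_3}) : R :=
  (\sum_(z | inM z' z) zeta_prob z * condE z) / PM z'.

Definition Pa (a : 'I_3) (i : S) (j : V) : R :=
  if c j < s i then 0 else
  match val a with
  | 0%N => if inP j Cplus i then x i j / d j Cplus else 0
  | 1%N => if inP j Cminus i then 1 - (1 - x i j / d j Cminus) ^+ 2 else 0
  | _ => if inP j Cplus i || inP j Cminus i then 0 else
         match [pick q : 'I_(qbound j).+1 | (0 < val q)%N && inP j (Cq q) i] with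
         | Some q => 1 - (1 - x i j / d j (Cq q)) ^+ (n j q)
         | None => 0
         end
  end.

Definition Pz (a : option 'I_3) (i : S) (j : V) : R :=
  match a with
  | Some a => Pa a i j
  | None => delta * d j Cplus * Pa (@Ordinal 3 0 isT) i j
            + delta * h j * Pa (@Ordinal 3 1 isT) i j
            + (1 - delta * d j Cplus - delta * h j) * Pa (@Ordinal 3 2 isT) i j
  end.

End SPSC.

(* Main.v *)
Require Import Defs.
From mathcomp Require Import all_boot all_order all_algebra.
From mathcomp Require Import ring lra.
Set Implicit Arguments. Unset Strict Implicit. Unset Printing Implicit Defensive.
Import Order.TTheory GRing.Theory Num.Theory.
Local Open Scope ring_scope.

Section Main.
Variable R : archiRealFieldType.
Variables S V U : finType.
Variable s : S -> R.
Variable c : V -> R.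
Variable iu : U -> S.
Variable T : U -> {set V}.
Variable w : U -> R.
Variable x : S -> V -> R.

Lemma all_flatten' (X0 : Type) (a : pred X0) (ss : seq (seq X0)) :
  all a (flatten ss) = all (all a) ss.
Proof. by elim: ss => //= s0 ss IH; rewrite all_cat IH. Qed.

Lemma prod_nseq (I : Type) (F : I -> R) n a :
  \prod_(k <- nseq n a) F k = F a ^+ n.
Proof. by elim: n => [|n IH]; rewrite ?big_nil ?expr0 // big_cons IH exprS. Qed.

Lemma eq_big_all (X : Type) (F G : X -> R) (L : seq X) :
  all (fun l => F l == G l) L -> \prod_(l <- L) F l = \prod_(l <- L) G l.
Proof.
elim: L => [|l L IH] /=; first by rewrite !big_nil.
by case/andP=> /eqP e /IH h; rewrite !big_cons e h.
Qed.

Lemma sum_tuple_zip (X : Type) (F : X -> S -> R) (L : seq X) :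
  \sum_(t : (size L).-tuple S) \prod_(p <- zip L t) F p.1 p.2
  = \prod_(l <- L) \sum_a F l a.
Proof.
elim: L => [|l L IH].
  rewrite big_nil /= (eq_bigr (fun _ => 1)); last by move=> t _; rewrite tuple0 big_nil.
  by rewrite sumr_const card_tuple expn0.
rewrite big_cons -IH mulr_suml.
rewrite (eq_bigr (fun a => \sum_(t : (size L).-tuple S) F l a * \prod_(p <- zip L t) F p.1 p.2));
  last by move=> a _; rewrite mulr_sumr.
rewrite pair_big /=.
rewrite (reindex (fun p : S * (size L).-tuple S => [tuple of p.1 :: p.2])) /=.
  by apply: eq_bigr => p _; rewrite big_cons.
exists (fun t : (size L).+1.-tuple S => (thead t, [tuple of behead t])).
  by move=> [a t] _ /=; congr pair; apply: val_inj.
by move=> t _ /=; rewrite [in RHS](tuple_eta t).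
Qed.

Lemma has_ind (X : Type) (q : pred X) (s0 : seq X) :
  (if has q s0 then 1 else 0 : R) = 1 - \prod_(p <- s0) (1 - (if q p then 1 else 0)).
Proof.
elim: s0 => [|p s0 IH] /=; first by rewrite big_nil subrr.
rewrite big_cons; case: (q p) => /=; first by rewrite subrr mul0r subr0.
by rewrite subr0 mul1r IH.
Qed.


Local Notation sp := (slot_prob s c x).
Local Arguments inP : simpl never.
Local Arguments d : simpl never.
Local Arguments n : simpl never.

Lemma ex_cov (L : seq (V * cls)) (t : seq S) (A : {set V}) a :
  [exists j in A, covered L t a j] = has (fun p : (V * cls) * S => (p.1.1 \in A) && (p.2 == a)) (zip L t).
Proof.
rewrite /covered; elim: (zip L t) => [|p l IH] /=.
  by apply/existsP => [[j]]; rewrite andbF.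
rewrite -IH; apply/existsP/orP.
  move=> [j /andP[jA /orP[/andP[/eqP e ea] | H]]].
    by left; rewrite e jA ea.
  by right; apply/existsP; exists j; rewrite jA H.
move=> [/andP[pA ea] | /existsP[j /andP[jA H]]].
  by exists p.1.1; rewrite pA eqxx ea.
by exists j; rewrite jA H orbT.
Qed.

Lemma condE_eq z :
  all (fun l => \sum_a sp l a == 1) (slots s c x z) ->
  condE s c iu T w x z = \sum_k w k *
     (1 - \prod_(l <- slots s c x z) (1 - (if l.1 \in T k then sp l (iu k) else 0))).
Proof.
move=> Hall; rewrite /condE /reward.
under eq_bigr => t _ do rewrite mulr_sumr.
rewrite exchange_big; apply: eq_bigr => k _.
under eq_bigr => t _ do rewrite mulrCA.
rewrite -mulr_sumr; congr (_ * _).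
set L := slots s c x z.
transitivity (\sum_(t : (size L).-tuple S) \prod_(p <- zip L t) sp p.1 p.2 *
   (1 - \prod_(p <- zip L t) (1 - if (p.1.1 \in T k) && (p.2 == iu k) then 1 else 0))).
  by apply: eq_bigr => t _; rewrite ex_cov has_ind.
transitivity (\sum_(t : (size L).-tuple S) \prod_(p <- zip L t) sp p.1 p.2 -
  \sum_(t : (size L).-tuple S) \prod_(p <- zip L t)
     (fun l a => sp l a * (1 - (if (l.1 \in T k) && (a == iu k) then 1 else 0))) p.1 p.2).
  by rewrite -sumrB; apply: eq_bigr => t _; rewrite mulrBr mulr1 -big_split.
rewrite (sum_tuple_zip sp L).
rewrite (sum_tuple_zip (fun l a => sp l a * (1 - (if (l.1 \in T k) && (a == iu k) then 1 else 0))) L).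
congr (_ - _).
  rewrite (@eq_big_all _ _ (fun=> 1)); first by rewrite big1.
  by apply: sub_all Hall => l.
apply: eq_big_all; apply: sub_all Hall => l /eqP H.
under eq_bigr => a _ do rewrite mulrBr mulr1.
rewrite sumrB H; case: (l.1 \in T k) => /=.
  rewrite (bigD1 (iu k)) //= eqxx mulr1 big1 ?addr0 //.
  by move=> a /negbTE ->; rewrite mulr0.
by rewrite big1 // => a _; rewrite mulr0.
Qed.


Lemma prod_slots z i (A : {set V}) :
  \prod_(l <- slots s c x z) (1 - (if l.1 \in A then sp l i else 0)) =
  \prod_(j in A) \prod_(k <- slots_at s c x j (z j)) (1 - sp (j, k) i).
Proof.
rewrite /slots big_flatten big_map big_enum /= [RHS]big_mkcond /=.
apply: eq_bigr => j _; rewrite big_map /=.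
by case: (j \in A) => //; rewrite big1 // => k _; rewrite subr0.
Qed.

Hypothesis hc : forall j, 0 < c j.

Lemma gam_ge0 k : 0 <= gamma R ^+ k.
Proof. by apply: exprn_ge0; rewrite /gamma; lra. Qed.
Lemma gam_le1 k : gamma R ^+ k <= 1.
Proof. by apply: exprn_ile1; rewrite /gamma; lra. Qed.
Lemma gam_mono k m : (k <= m)%N -> gamma R ^+ m <= gamma R ^+ k.
Proof. by move=> km; apply: ler_wiXn2l => //; rewrite /gamma; lra. Qed.

Lemma inPq_le j q i : inP s c j (Cq q) i -> s i <= c j / 4.
Proof.
rewrite /inP /beta => /andP[_ H].
have h1 := gam_le1 q.-1; have h2 := gam_ge0 q.-1; have h3 := hc j.
nra.
Qed.

Lemma inPq_disj j q q' i : (q < q')%N -> inP s c j (Cq q) i -> inP s c j (Cq q') i -> False.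
Proof.
rewrite /inP /beta => lt /andP[H1 _] /andP[_ H2].
have h1 : gamma R ^+ q'.-1 <= gamma R ^+ q by apply: gam_mono; case: (q') lt => //.
have h3 := hc j.
nra.
Qed.

Lemma inPq_uniq j q q' i : inP s c j (Cq q) i -> inP s c j (Cq q') i -> q = q'.
Proof.
move=> H1 H2; case: (ltngtP q q') => // lt.
  by case: (inPq_disj lt H1 H2).
by case: (inPq_disj lt H2 H1).
Qed.

Lemma node_prod j (b : 'I_3) i :
  \prod_(k <- slots_at s c x j b) (1 - sp (j, k) i) = 1 - Pa s c x b i j.
Proof.
case: b => [[|[|[|b]]] Hb] //.
- rewrite /slots_at /Pa /= big_seq1 /slot_prob /=.
  case hlt: (c j < s i); case hp: (inP s c j Cplus i) => //=; rewrite ?subr0 //.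
  by move: hp => /andP[_ H]; move: hlt; rewrite ltNge H.
- rewrite /slots_at /Pa /= big_cons big_seq1 /slot_prob /=.
  case hlt: (c j < s i); case hp: (inP s c j Cminus i) => //=; rewrite ?subr0 ?mulr1 //; last by ring.
  move: hp hlt => /andP[_ H]; have := hc j; move=> hcj; rewrite ltNge.
  suff -> : s i <= c j by [].
  by apply: (le_trans H); lra.
rewrite /slots_at /Pa /= big_flatten big_map.
under eq_bigr => q _ do rewrite prod_nseq.
case: pickP => [q /andP[q0 Hq] | Hnone].
- have Hle := inPq_le Hq.
  have hcs : (c j < s i) = false by apply/negbTE; rewrite -leNgt; apply: (le_trans Hle); have := hc j; lra.
  have hp : inP s c j Cplus i = false.
    apply/negbTE; rewrite /inP negb_and; apply/orP; left.
    by rewrite -leNgt; apply: (le_trans Hle); have := hc j; lra.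
  have hm : inP s c j Cminus i = false.
    by apply/negbTE; rewrite /inP negb_and; apply/orP; left; rewrite -leNgt.
  rewrite hcs hp hm /=.
  rewrite (bigD1_seq (val q)) ?iota_uniq //=; last first.
    by rewrite mem_iota q0 add1n ltn_ord.
  rewrite big1 ?mulr1; first by rewrite /slot_prob /= Hq; ring.
  move=> q' /negbTE nq; rewrite /slot_prob /=.
  case: ifP => [H|_]; last by rewrite subr0 expr1n.
  by move: nq; rewrite (inPq_uniq H Hq) eqxx.
- rewrite big_seq big1; last first.
    move=> q; rewrite mem_iota => /andP[q1 q2]; rewrite /slot_prob /=.
    case: ifP => [H|_]; last by rewrite subr0 expr1n.
    have := Hnone (@Ordinal (qbound s c j).+1 q ltac:(by rewrite -add1n)).
    by rewrite /= q1 H.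
  by case: ifP => _; [rewrite subr0 | case: ifP => _; rewrite subr0].
Qed.


Lemma sp_sum j k : d s c x j k != 0 -> \sum_a sp (j, k) a = 1.
Proof.
move=> hd; rewrite /slot_prob /= -big_mkcond /= -mulr_suml.
have -> : \sum_(i | inP s c j k i) x i j = d s c x j k by [].
by rewrite divff.
Qed.

Lemma slots_ok z : zeta_prob s c x z != 0 ->
  all (fun l => \sum_a sp l a == 1) (slots s c x z).
Proof.
move=> hz; rewrite /slots all_flatten' all_map; apply/allP => j _ /=; rewrite all_map.
have hzj : zprob s c x j (z j) != 0.
  by apply: contra hz => H; apply/prodf_eq0; exists j.
case: (z j) hzj => [[|[|[|b]]] Hb] // hzj; rewrite /slots_at /=.
- rewrite andbT; apply/eqP/sp_sum; move: hzj; rewrite /zprob /=.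
  by apply: contra => /eqP ->; rewrite mulr0.
- rewrite andbT andbb; apply/eqP/sp_sum; move: hzj; rewrite /zprob /= /h.
  by apply: contra => /eqP ->; case: ifP => _; rewrite ?mul0r mulr0.
- rewrite all_flatten' all_map; apply/allP => q _ /=; rewrite all_nseq.
  case n0: (n s c x j q == 0)%N => //=; apply/eqP/sp_sum; apply: contra (negbT n0) => /eqP d0.
  by rewrite /n d0 mulr0 ceil0.
Qed.

Lemma condE_f z : zeta_prob s c x z != 0 ->
  condE s c iu T w x z =
  \sum_k w k * (1 - \prod_(j in T k) (1 - Pa s c x (z j) (iu k) j)).
Proof.
move=> hz; rewrite (condE_eq (slots_ok hz)); apply: eq_bigr => k _.
rewrite prod_slots; congr (_ * (1 - _)); apply: eq_bigr => j _.
by rewrite node_prod.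
Qed.


Variable z' : {ffun V -> option 'I_3}.

Definition Qz (j : V) : pred 'I_3 := fun a => if z' j is Some b then a == b else true.

Lemma distr (G : V -> 'I_3 -> R) :
  \sum_(z | inM z' z) \prod_j G j (z j) = \prod_j \sum_(a | Qz j a) G j a.
Proof.
rewrite bigA_distr_big_dep; apply: eq_bigl => z.
apply/forallP/familyP => H j; have := H j; rewrite /Qz; by case: (z' j).
Qed.

Lemma Hsum j : \sum_(a | Qz j a) zprob s c x j a =
  if z' j is Some b then zprob s c x j b else 1.
Proof.
rewrite /Qz; case: (z' j) => [b|]; first by rewrite big_pred1_eq.
rewrite !big_ord_recl big_ord0 /zprob /=; ring.
Qed.

Lemma Ksum j (k : U) :
  \sum_(a | Qz j a) zprob s c x j a * (if j \in T k then 1 - Pa s c x a (iu k) j else 1)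
  = (if z' j is Some b then zprob s c x j b else 1) *
    (if j \in T k then 1 - Pz s c x (z' j) (iu k) j else 1).
Proof.
case: (j \in T k); last by rewrite mulr1 -Hsum; apply: eq_bigr => a _; rewrite mulr1.
rewrite /Qz /Pz; case: (z' j) => [b|]; first by rewrite big_pred1_eq.
rewrite !big_ord_recl big_ord0 /zprob /=.
rewrite /Pa /=; ring.
Qed.


Lemma main_eq (hpos : 0 < PM s c x z') :
  Eprime s c iu T w x z' =
  \sum_k w k * (1 - \prod_(j in T k) (1 - Pz s c x (z' j) (iu k) j)).
Proof.
have PMe : PM s c x z' = \prod_j (if z' j is Some b then zprob s c x j b else 1).
  rewrite /PM /zeta_prob distr; apply: eq_bigr => j _; exact: Hsum.
rewrite /Eprime.
have -> : \sum_(z | inM z' z) zeta_prob s c x z * condE s c iu T w x z =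
  \sum_(z | inM z' z) zeta_prob s c x z *
     \sum_k w k * (1 - \prod_(j in T k) (1 - Pa s c x (z j) (iu k) j)).
  apply: eq_bigr => z _; have [->|hz] := eqVneq (zeta_prob s c x z) 0.
    by rewrite !mul0r.
  by rewrite condE_f.
under eq_bigr => z _ do rewrite mulr_sumr.
rewrite exchange_big /= mulr_suml; apply: eq_bigr => k _.
have E2 : \sum_(z | inM z' z) zeta_prob s c x z * \prod_(j in T k) (1 - Pa s c x (z j) (iu k) j)
   = PM s c x z' * \prod_(j in T k) (1 - Pz s c x (z' j) (iu k) j).
  rewrite (eq_bigr (fun z : {ffun V -> 'I_3} => \prod_j (zprob s c x j (z j) *
     (if j \in T k then 1 - Pa s c x (z j) (iu k) j else 1)))); last first.
    by move=> z _; rewrite /zeta_prob big_split /= -big_mkcond.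
  rewrite (distr (fun j a => zprob s c x j a * (if j \in T k then 1 - Pa s c x a (iu k) j else 1))) PMe [X in _ * X]big_mkcond -big_split /=; apply: eq_bigr => j _; exact: Ksum.
have E1 : \sum_(z | inM z' z) zeta_prob s c x z = PM s c x z' by [].
transitivity ((w k * (\sum_(z | inM z' z) zeta_prob s c x z) - w k * \sum_(z | inM z' z)
   zeta_prob s c x z * \prod_(j in T k) (1 - Pa s c x (z j) (iu k) j)) / PM s c x z').
  by congr (_ / _); rewrite !mulr_sumr -sumrB; apply: eq_bigr => z _; ring.
rewrite E1 E2; field; exact: lt0r_neq0.
Qed.

End Main.

Unset Implicit Arguments.
Set Strict Implicit.

Theorem theorem14 (R : archiRealFieldType) (S V U : finType)
    (s : S -> R) (c : V -> R) (iu : U -> S) (T : U -> {set V}) (w : U -> R)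
    (x : S -> V -> R) (y : U -> R)
    (hs : forall i, 0 < s i) (hc : forall j, 0 < c j) (hw : forall k, 0 < w k)
    (hopt : lp_optimal s c iu T w x y)
    (z' : {ffun V -> option 'I_3})
    (hpos : 0 < PM s c x z') :
  Eprime s c iu T w x z' =
  \sum_(k : U) w k *
     (1 - \prod_(j in T k) (1 - Pz s c x (z' j) (iu k) j)).
Proof.
by apply: main_eq.
Qed.
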